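(* Let $\mathfrak{g}=\mathfrak{sl}(2,\mathbb{R})$, with basis $(Y_1,Y_2,Y_3)$ satisfying $[Y_1,Y_2]=Y_3$, $[Y_1,Y_3]=Y_2$, $[Y_2,Y_3]=Y_1$, and with basis $(H,X_+,X_-)$ where $H=\begin{pmatrix}1&0\\0&-1\end{pmatrix}$, $X_+=\begin{pmatrix}0&1\\0&0\end{pmatrix}$, $X_-=\begin{pmatrix}0&0\\-1&0\end{pmatrix}$ (so $[H,X_+]=2X_+$, $[H,X_-]=-2X_-$, $[X_+,X_-]=H$, and $Y_1=\frac12 H$, $Y_2=\frac12(X_+-X_-)$, $Y_3=\frac12(X_++X_-)$). Let $J:\mathfrak{g}\to\mathfrak{g}$ be any linear map. Then $J$ has zero torsion if and only if it is equivalent to the endomorphism whose matrix in the basis $(Y_1,Y_2,Y_3)$ is $$J_*(\lambda)=\begin{pmatrix}0&0&-1\\0&\lambda&0\\1&0&0\end{pmatrix}$$ for some $\lambda\in\mathbb{R}$, and $J_*(\lambda)\not\equiv J_*(\mu)$ for $\lambda\neq\mu$. Equivalently, $J$ has zero torsion if and only if it is equivalent to the endomorphism whose matrix in the basis $(H,X_+,X_-)$ is $$J(\alpha)=\begin{pmatrix}0&-\frac12&-\frac12\\1&\alpha&-\alpha\\1&-\alpha&\alpha\end{pmatrix}$$ for some $\alpha\in\mathbb{R}$, and $J(\alpha)\not\equiv J(\beta)$ for $\alpha\neq\beta$.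
   Context: A linear map $J:\mathfrak{g}\to\mathfrak{g}$ on a real Lie algebra has zero torsion if $[JX,JY]-[X,Y]-J[JX,Y]-J[X,JY]=0$ for all $X,Y\in\mathfrak{g}$. Two linear maps $J,J'$ on $\mathfrak{g}$ are equivalent ($J\equiv J'$) if there is a Lie algebra automorphism $\Phi\in\mathrm{Aut}\,\mathfrak{g}$ with $J'=\Phi\circ J\circ\Phi^{-1}$. The matrix of a linear map in a basis $(e_j)$ is $(\xi^i_j)$ with $Je_j=\sum_i\xi^i_j e_i$ (the $j$-th column gives the coordinates of $Je_j$). *)

(* Defs.v *)
From HB Require Import structures.
From mathcomp Require Import all_boot all_order all_algebra.
From mathcomp Require Import reals.
Set Implicit Arguments. Unset Strict Implicit. Unset Printing Implicit Defensive.
Import Order.TTheory GRing.Theory Num.Theory.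
Local Open Scope ring_scope.

(* The Lie algebra g = sl(2,R) is modelled as column vectors of coordinates
   in the basis (Y_1,Y_2,Y_3) (indices 0,1,2), with bracket determined by
   [Y1,Y2]=Y3, [Y1,Y3]=Y2, [Y2,Y3]=Y1. *)
Section Sl2.
Variable R : realType.

Definition sl2 := 'cV[R]_3.

Definition lb (x y : sl2) : sl2 :=
  let x1 := x 0 0 in let x2 := x 1 0 in let x3 := x 2%:R 0 in
  let y1 := y 0 0 in let y2 := y 1 0 in let y3 := y 2%:R 0 in
  \col_(i < 3) nth 0 [:: x2 * y3 - x3 * y2; x1 * y3 - x3 * y1; x1 * y2 - x2 * y1] i.

(* A linear map g -> g is represented by its matrix in the basis (Y_i):
   column j = coordinates of J Y_j; J acts by J *m x. *)
Definition torsion_free (J : 'M[R]_3) : Prop :=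
  forall x y : sl2,
    lb (J *m x) (J *m y) - lb x y - J *m lb (J *m x) y - J *m lb x (J *m y) = 0.

Definition lie_aut (P : 'M[R]_3) : Prop :=
  P \in unitmx /\ forall x y : sl2, P *m lb x y = lb (P *m x) (P *m y).

Definition equivJ (J J' : 'M[R]_3) : Prop :=
  exists P, lie_aut P /\ J' = P *m J *m invmx P.

Definition mx3 (a : seq (seq R)) : 'M[R]_3 :=
  \matrix_(i < 3, j < 3) nth 0 (nth [::] a i) j.

Definition Jstar (l : R) : 'M[R]_3 :=
  mx3 [:: [:: 0; 0; -1]; [:: 0; l; 0]; [:: 1; 0; 0]].

(* Coordinates of H = 2 Y1, X+ = Y2 + Y3, X- = Y3 - Y2 in the basis (Y_i),
   as the columns of the change-of-basis matrix. *)
Definition BHX : 'M[R]_3 :=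
  mx3 [:: [:: 2; 0; 0]; [:: 0; 1; -1]; [:: 0; 1; 1]].

Definition endo_HX (M : 'M[R]_3) : 'M[R]_3 := BHX *m M *m invmx BHX.

Definition Jalpha (a : R) : 'M[R]_3 :=
  mx3 [:: [:: 0; -(1/2); -(1/2)]; [:: 1; a; -a]; [:: 1; -a; a]].

End Sl2.

(* Main.v *)
Require Import Defs.
From HB Require Import structures.
From mathcomp Require Import all_boot all_order all_algebra.
From mathcomp Require Import reals.
From mathcomp Require Import ring lra.
Import Order.TTheory GRing.Theory Num.Theory.
Local Open Scope ring_scope.
Set Implicit Arguments. Unset Strict Implicit. Unset Printing Implicit Defensive.

Section S.
Variable R : realType.
Implicit Types (a b c : R).

Definition vec3 (a b c : R) : 'cV[R]_3 := \col_(i < 3) nth 0 [:: a; b; c] i.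

Lemma lb_vec3 a b c a' b' c' : lb (vec3 a b c) (vec3 a' b' c') =
  vec3 (b*c' - c*b') (a*c' - c*a') (a*b' - b*a').
Proof. by apply/matrixP=> i j; rewrite !mxE. Qed.

Lemma vec3_eta (x : 'cV[R]_3) : x = vec3 (x 0 0) (x 1 0) (x 2%:R 0).
Proof.
apply/matrixP=> i j; rewrite !mxE (ord1 j).
by case: i => [[|[|[|//]]] Hi]; congr (x _ _); apply: val_inj.
Qed.

Lemma mx3_mulv m00 m01 m02 m10 m11 m12 m20 m21 m22 a b c :
  mx3 [:: [:: m00; m01; m02]; [:: m10; m11; m12]; [:: m20; m21; m22]] *m vec3 a b c =
  vec3 (m00*a + m01*b + m02*c) (m10*a + m11*b + m12*c) (m20*a + m21*b + m22*c).
Proof.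
apply/matrixP=> i j; rewrite !mxE !big_ord_recr big_ord0 /= !mxE add0r.
by case: i => [[|[|[|//]]] Hi].
Qed.

Lemma vec3D a b c a' b' c' : vec3 a b c + vec3 a' b' c' = vec3 (a+a') (b+b') (c+c').
Proof. apply/matrixP=> i j; rewrite !mxE; by case: i => [[|[|[|//]]] Hi]. Qed.
Lemma vec3N a b c : - vec3 a b c = vec3 (-a) (-b) (-c).
Proof. apply/matrixP=> i j; rewrite !mxE; by case: i => [[|[|[|//]]] Hi]. Qed.
Lemma vec3B a b c a' b' c' : vec3 a b c - vec3 a' b' c' = vec3 (a-a') (b-b') (c-c').
Proof. by rewrite vec3N vec3D. Qed.
Lemma vec3Z k a b c : k *: vec3 a b c = vec3 (k*a) (k*b) (k*c).
Proof. apply/matrixP=> i j; rewrite !mxE; by case: i => [[|[|[|//]]] Hi]. Qed.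
Lemma vec3_0 : (0 : 'cV[R]_3) = vec3 0 0 0.
Proof. apply/matrixP=> i j; rewrite !mxE; by case: i => [[|[|[|//]]] Hi]. Qed.

Lemma vec3_inj a b c a' b' c' : vec3 a b c = vec3 a' b' c' -> [/\ a = a', b = b' & c = c'].
Proof.
move=> H; split.
- by have := congr1 (fun v : 'cV[R]_3 => v 0 0) H; rewrite !mxE.
- by have := congr1 (fun v : 'cV[R]_3 => v 1 0) H; rewrite !mxE.
- by have := congr1 (fun v : 'cV[R]_3 => v 2%:R 0) H; rewrite !mxE.
Qed.

Lemma mx3_eta (M : 'M[R]_3) : M =
  mx3 [:: [:: M 0 0; M 0 1; M 0 2%:R]; [:: M 1 0; M 1 1; M 1 2%:R]; [:: M 2%:R 0; M 2%:R 1; M 2%:R 2%:R]].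
Proof.
apply/matrixP=> i j; rewrite !mxE.
by case: i => [[|[|[|//]]] Hi]; case: j => [[|[|[|//]]] Hj]; congr (M _ _); apply: val_inj.
Qed.


Lemma colext (A B : 'M[R]_3) : (forall x : 'cV[R]_3, A *m x = B *m x) -> A = B.
Proof.
move=> H; apply/matrixP=> i j.
by have := congr1 (fun M : 'cV[R]_3 => M i 0) (H (delta_mx j 0)); rewrite -!colE !mxE.
Qed.


Definition Bf (x y : 'cV[R]_3) : R := x 0 0 * y 0 0 - x 1 0 * y 1 0 + x 2%:R 0 * y 2%:R 0.
Lemma Bf_vec3 a b c a' b' c' : Bf (vec3 a b c) (vec3 a' b' c') = a*a' - b*b' + c*c'.
Proof. by rewrite /Bf !mxE. Qed.

Definition Rm3 (v0 v1 v2 : R) : 'M[R]_3 :=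
  mx3 [:: [:: 1 - 2 / (v0*v0 - v1*v1 + v2*v2)*v0*v0; 2 / (v0*v0 - v1*v1 + v2*v2)*v0*v1; -(2 / (v0*v0 - v1*v1 + v2*v2)*v0*v2)];
          [:: -(2 / (v0*v0 - v1*v1 + v2*v2)*v1*v0); 1 + 2 / (v0*v0 - v1*v1 + v2*v2)*v1*v1; -(2 / (v0*v0 - v1*v1 + v2*v2)*v1*v2)];
          [:: -(2 / (v0*v0 - v1*v1 + v2*v2)*v2*v0); 2 / (v0*v0 - v1*v1 + v2*v2)*v2*v1; 1 - 2 / (v0*v0 - v1*v1 + v2*v2)*v2*v2]].

Lemma Rm_act v0 v1 v2 x0 x1 x2 : Rm3 v0 v1 v2 *m vec3 x0 x1 x2 =
  vec3 x0 x1 x2 - (2 / (v0*v0 - v1*v1 + v2*v2) * (x0*v0 - x1*v1 + x2*v2)) *: vec3 v0 v1 v2.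
Proof. rewrite /Rm3 mx3_mulv vec3Z vec3B; congr vec3; ring. Qed.

Lemma Rm_anti v0 v1 v2 (x y : 'cV[R]_3) : v0*v0 - v1*v1 + v2*v2 != 0 ->
  Rm3 v0 v1 v2 *m lb x y = - lb (Rm3 v0 v1 v2 *m x) (Rm3 v0 v1 v2 *m y).
Proof.
move=> hv; rewrite (vec3_eta x) (vec3_eta y) lb_vec3 !Rm_act !vec3Z !vec3B lb_vec3 vec3N.
congr vec3; field => //.
Qed.

Lemma Rm_B v0 v1 v2 (x y : 'cV[R]_3) : v0*v0 - v1*v1 + v2*v2 != 0 ->
  Bf (Rm3 v0 v1 v2 *m x) (Rm3 v0 v1 v2 *m y) = Bf x y.
Proof.
move=> hv; rewrite (vec3_eta x) (vec3_eta y) !Rm_act !vec3Z !vec3B !Bf_vec3.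
field => //.
Qed.

Lemma Rm_invol v0 v1 v2 : v0*v0 - v1*v1 + v2*v2 != 0 ->
  Rm3 v0 v1 v2 *m Rm3 v0 v1 v2 = 1%:M.
Proof.
move=> hv; apply: colext => x; rewrite mul1mx -mulmxA (vec3_eta x) !(Rm_act, vec3Z, vec3B).
congr vec3; field => //.
Qed.

End S.

Section Solve.
Variable R : realType.
Lemma mulK0 (n : nat) (x : R) : n.+1%:R * x = 0 -> x = 0.
Proof. by move/eqP; rewrite mulf_eq0 pnatr_eq0 /= => /eqP. Qed.

Lemma sq0 (x y : R) : x*x + y*y = 0 -> x = 0 /\ y = 0.
Proof.
move=> h.
have hx : x*x = 0 by apply/eqP; rewrite eq_le; apply/andP; split; nra.
have hy : y*y = 0 by apply/eqP; rewrite eq_le; apply/andP; split; nra.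
by split; [move/eqP: hx | move/eqP: hy]; rewrite mulf_eq0 orbb => /eqP.
Qed.

Lemma null_lemma (w1 w2 w3 u1 u2 u3 : R) : w1*u1 - w2*u2 + w3*u3 = 0 ->
  w1*w1 - w2*w2 + w3*w3 = 0 -> (u1*u1 - u2*u2 + u3*u3 + 1) = 0 ->
  [/\ w1 = 0, w2 = 0 & w3 = 0].
Proof.
move=> H1 H2 g.
have h : w2*w2 + (w1*u3 - w3*u1)*(w1*u3 - w3*u1) = 0.
  have -> : w2*w2 + (w1*u3 - w3*u1)*(w1*u3 - w3*u1) =
     (w1*w1 - w2*w2 + w3*w3)*(u1*u1 - u2*u2 + u3*u3 + 1 - 1 + u2*u2)
     + w2*w2*(u1*u1 - u2*u2 + u3*u3 + 1) - (w1*u1 - w2*u2 + w3*u3)*((w1*u1 - w2*u2 + w3*u3) + 2*w2*u2) by ring.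
  by rewrite H1 H2 g; ring.
have [w20 _] := sq0 h.
have h2 : w1*w1 + w3*w3 = 0 by move: H2; rewrite w20; move=> H2; rewrite -H2; ring.
by have [] := sq0 h2.
Qed.

Lemma solve_torsion (u1 u2 u3 a b c d e f t : R) :
  (t-(a-d+f)) = 0 ->
  (2*u1*b + 2*u2*a + (-2)*b*e + 2*c*d) = 0 ->
  ((-2)*u1*d + (-2)*u2*b + 2*a*e + (-2)*b*c) = 0 ->
  (-(u1*u1) + 2*u1*e + u2*u2 + 2*u2*c + -(u3*u3) + -(a*d) + -(a*f) + b*b + c*c + d*f + -(e*e) + (-1)) = 0 ->
  (2*u1*c + (-2)*u3*a + (-2)*b*f + 2*c*e) = 0 ->
  (-(u1*u1) + (-2)*u1*e + u2*u2 + -(u3*u3) + 2*u3*b + a*d + a*f + -(b*b) + -(c*c) + d*f + -(e*e) + (-1)) = 0 ->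
  (2*u1*f + (-2)*u3*c + (-2)*a*e + 2*b*c) = 0 ->
  (-(u1*u1) + u2*u2 + (-2)*u2*c + -(u3*u3) + (-2)*u3*b + a*d + -(a*f) + -(b*b) + c*c + -(d*f) + e*e + (-1)) = 0 ->
  (2*u2*e + 2*u3*d + 2*b*f + (-2)*c*e) = 0 ->
  ((-2)*u2*f + (-2)*u3*e + (-2)*b*e + 2*c*d) = 0 ->
  (u1*u1 - u2*u2 + u3*u3 + 1) = 0 /\ a = -(t*u1*u1) /\ b = t*u1*u2 /\ c = -(t*u1*u3) /\
      d = -(t*u2*u2) /\ e = t*u2*u3 /\ f = -(t*u3*u3).
Proof.
move=> Gt E1 E2 E3 E4 E5 E6 E7 E8 E9.
have hb : (u1*u1 - u2*u2 + u3*u3 + 1) = 0.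
  have [//|hb] := eqVneq (u1*u1 - u2*u2 + u3*u3 + 1) 0.
  exfalso.
have F01' : 4 * ((u1*u1 - u2*u2 + u3*u3 + 1)*b) = 0.
{ have -> : 4 * ((u1*u1 - u2*u2 + u3*u3 + 1)*b) = (e) * (2*u1*b + 2*u2*a + (-2)*b*e + 2*c*d) + (-(c)) * ((-2)*u1*d + (-2)*u2*b + 2*a*e + (-2)*b*c) + ((-2)*b) * (-(u1*u1) + 2*u1*e + u2*u2 + 2*u2*c + -(u3*u3) + -(a*d) + -(a*f) + b*b + c*c + d*f + -(e*e) + (-1)) + (-(d)) * (2*u1*c + (-2)*u3*a + (-2)*b*f + 2*c*e) + (-(b)) * (-(u1*u1) + (-2)*u1*e + u2*u2 + -(u3*u3) + 2*u3*b + a*d + a*f + -(b*b) + -(c*c) + d*f + -(e*e) + (-1)) + (-(b)) * (-(u1*u1) + u2*u2 + (-2)*u2*c + -(u3*u3) + (-2)*u3*b + a*d + -(a*f) + -(b*b) + c*c + -(d*f) + e*e + (-1)) + (-(a)) * (2*u2*e + 2*u3*d + 2*b*f + (-2)*c*e) by ring.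
  by rewrite E1 E2 E3 E4 E5 E7 E8; ring. }
have F01 : (u1*u1 - u2*u2 + u3*u3 + 1)*b = 0 by apply: (@mulK0 3); exact: F01'.

have F02' : 4 * ((u1*u1 - u2*u2 + u3*u3 + 1)*c) = 0.
{ have -> : 4 * ((u1*u1 - u2*u2 + u3*u3 + 1)*c) = (f) * (2*u1*b + 2*u2*a + (-2)*b*e + 2*c*d) + (-(c)) * (-(u1*u1) + 2*u1*e + u2*u2 + 2*u2*c + -(u3*u3) + -(a*d) + -(a*f) + b*b + c*c + d*f + -(e*e) + (-1)) + (-(e)) * (2*u1*c + (-2)*u3*a + (-2)*b*f + 2*c*e) + ((-2)*c) * (-(u1*u1) + (-2)*u1*e + u2*u2 + -(u3*u3) + 2*u3*b + a*d + a*f + -(b*b) + -(c*c) + d*f + -(e*e) + (-1)) + (-(b)) * (2*u1*f + (-2)*u3*c + (-2)*a*e + 2*b*c) + (-(c)) * (-(u1*u1) + u2*u2 + (-2)*u2*c + -(u3*u3) + (-2)*u3*b + a*d + -(a*f) + -(b*b) + c*c + -(d*f) + e*e + (-1)) + (a) * ((-2)*u2*f + (-2)*u3*e + (-2)*b*e + 2*c*d) by ring.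
  by rewrite E1 E3 E4 E5 E6 E7 E9; ring. }
have F02 : (u1*u1 - u2*u2 + u3*u3 + 1)*c = 0 by apply: (@mulK0 3); exact: F02'.

have F12' : 8 * ((u1*u1 - u2*u2 + u3*u3 + 1)*e) = 0.
{ have -> : 8 * ((u1*u1 - u2*u2 + u3*u3 + 1)*e) = (3*u3 + b) * (2*u1*b + 2*u2*a + (-2)*b*e + 2*c*d) + (a + (-3)*f) * ((-2)*u1*d + (-2)*u2*b + 2*a*e + (-2)*b*c) + (-(u1) + (-3)*e) * (-(u1*u1) + 2*u1*e + u2*u2 + 2*u2*c + -(u3*u3) + -(a*d) + -(a*f) + b*b + c*c + d*f + -(e*e) + (-1)) + (3*u2 + -(c)) * (2*u1*c + (-2)*u3*a + (-2)*b*f + 2*c*e) + (-(u1) + -(e)) * (-(u1*u1) + (-2)*u1*e + u2*u2 + -(u3*u3) + 2*u3*b + a*d + a*f + -(b*b) + -(c*c) + d*f + -(e*e) + (-1)) + (a + -(d)) * (2*u1*f + (-2)*u3*c + (-2)*a*e + 2*b*c) + (2*u1 + (-4)*e) * (-(u1*u1) + u2*u2 + (-2)*u2*c + -(u3*u3) + (-2)*u3*b + a*d + -(a*f) + -(b*b) + c*c + -(d*f) + e*e + (-1)) + ((-4)*c) * (2*u2*e + 2*u3*d + 2*b*f + (-2)*c*e) by ring.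
  by rewrite E1 E2 E3 E4 E5 E6 E7 E8; ring. }
have F12 : (u1*u1 - u2*u2 + u3*u3 + 1)*e = 0 by apply: (@mulK0 7); exact: F12'.

have Fad' : 2 * ((u1*u1 - u2*u2 + u3*u3 + 1)*(a+d)) = 0.
{ have -> : 2 * ((u1*u1 - u2*u2 + u3*u3 + 1)*(a+d)) = (c) * (2*u1*b + 2*u2*a + (-2)*b*e + 2*c*d) + (-(e)) * ((-2)*u1*d + (-2)*u2*b + 2*a*e + (-2)*b*c) + (-(a) + -(d)) * (-(u1*u1) + 2*u1*e + u2*u2 + 2*u2*c + -(u3*u3) + -(a*d) + -(a*f) + b*b + c*c + d*f + -(e*e) + (-1)) + (-(b)) * (2*u1*c + (-2)*u3*a + (-2)*b*f + 2*c*e) + (-(a)) * (-(u1*u1) + (-2)*u1*e + u2*u2 + -(u3*u3) + 2*u3*b + a*d + a*f + -(b*b) + -(c*c) + d*f + -(e*e) + (-1)) + (-(d)) * (-(u1*u1) + u2*u2 + (-2)*u2*c + -(u3*u3) + (-2)*u3*b + a*d + -(a*f) + -(b*b) + c*c + -(d*f) + e*e + (-1)) + (-(b)) * (2*u2*e + 2*u3*d + 2*b*f + (-2)*c*e) by ring.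
  by rewrite E1 E2 E3 E4 E5 E7 E8; ring. }
have Fad : (u1*u1 - u2*u2 + u3*u3 + 1)*(a+d) = 0 by apply: (@mulK0 1); exact: Fad'.

have Ffa' : 2 * ((u1*u1 - u2*u2 + u3*u3 + 1)*(f-a)) = 0.
{ have -> : 2 * ((u1*u1 - u2*u2 + u3*u3 + 1)*(f-a)) = (-(c)) * (2*u1*b + 2*u2*a + (-2)*b*e + 2*c*d) + (a) * (-(u1*u1) + 2*u1*e + u2*u2 + 2*u2*c + -(u3*u3) + -(a*d) + -(a*f) + b*b + c*c + d*f + -(e*e) + (-1)) + (b) * (2*u1*c + (-2)*u3*a + (-2)*b*f + 2*c*e) + (a + -(f)) * (-(u1*u1) + (-2)*u1*e + u2*u2 + -(u3*u3) + 2*u3*b + a*d + a*f + -(b*b) + -(c*c) + d*f + -(e*e) + (-1)) + (-(e)) * (2*u1*f + (-2)*u3*c + (-2)*a*e + 2*b*c) + (-(f)) * (-(u1*u1) + u2*u2 + (-2)*u2*c + -(u3*u3) + (-2)*u3*b + a*d + -(a*f) + -(b*b) + c*c + -(d*f) + e*e + (-1)) + (c) * ((-2)*u2*f + (-2)*u3*e + (-2)*b*e + 2*c*d) by ring.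
  by rewrite E1 E3 E4 E5 E6 E7 E9; ring. }
have Ffa : (u1*u1 - u2*u2 + u3*u3 + 1)*(f-a) = 0 by apply: (@mulK0 1); exact: Ffa'.

  have hB : b = 0 by move/eqP: F01; rewrite mulf_eq0 (negbTE hb) => /eqP.
  have hC : c = 0 by move/eqP: F02; rewrite mulf_eq0 (negbTE hb) => /eqP.
  have hE : e = 0 by move/eqP: F12; rewrite mulf_eq0 (negbTE hb) => /eqP.
  have hAD : (a+d) = 0 by move/eqP: Fad; rewrite mulf_eq0 (negbTE hb) => /eqP.
  have hFA : (f-a) = 0 by move/eqP: Ffa; rewrite mulf_eq0 (negbTE hb) => /eqP.
have Fa' : 2 * (a*(a*a+1)) = 0.
{ have -> : 2 * (a*(a*a+1)) = (u2 + -(c)) * (2*u1*b + 2*u2*a + (-2)*b*e + 2*c*d) + (-(u1)) * ((-2)*u1*d + (-2)*u2*b + 2*a*e + (-2)*b*c) + (u3) * (2*u1*c + (-2)*u3*a + (-2)*b*f + 2*c*e) + (-(a)) * (-(u1*u1) + (-2)*u1*e + u2*u2 + -(u3*u3) + 2*u3*b + a*d + a*f + -(b*b) + -(c*c) + d*f + -(e*e) + (-1)) + (-(a)) * (-(u1*u1) + u2*u2 + (-2)*u2*c + -(u3*u3) + (-2)*u3*b + a*d + -(a*f) + -(b*b) + c*c + -(d*f) + e*e + (-1)) + (c) * ((-2)*u2*f + (-2)*u3*e + (-2)*b*e + 2*c*d) + ((-4)*u1*u2 + 2*u2*e + 2*u3*f + (-2)*a*b) * b + ((-2)*u1*u3 +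 (-2)*u2*d + 2*u2*f) * c + ((-2)*u1*u1 + 2*a*a) * (a+d) by ring.
  by rewrite E1 E2 E4 E5 E7 E9 hB hC hAD; ring. }
have Fa : a*(a*a+1) = 0 by apply: (@mulK0 1); exact: Fa'.

  have hA : a = 0.
    move/eqP: Fa; rewrite mulf_eq0 => /orP[/eqP//|/eqP h].
    have : 0 < a*a+1 by nra.
    by rewrite h ltxx.
have Fg' : 2 * ((u1*u1 - u2*u2 + u3*u3 + 1)) = 0.
{ have -> : 2 * ((u1*u1 - u2*u2 + u3*u3 + 1)) = ((-1)) * (-(u1*u1) + (-2)*u1*e + u2*u2 + -(u3*u3) + 2*u3*b + a*d + a*f + -(b*b) + -(c*c) + d*f + -(e*e) + (-1)) + ((-1)) * (-(u1*u1) + u2*u2 + (-2)*u2*c + -(u3*u3) + (-2)*u3*b + a*d + -(a*f) + -(b*b) + c*c + -(d*f) + e*e + (-1)) + ((-2)*b) * b + ((-2)*u2) * c + ((-2)*u1) * e + (2*a) * (a+d) + ((-2)*a) * a by ring.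
  by rewrite E5 E7 hB hC hE hAD hA; ring. }
have Fg : (u1*u1 - u2*u2 + u3*u3 + 1) = 0 by apply: (@mulK0 1); exact: Fg'.
  by move: hb; rewrite Fg eqxx.
have B1_0' : 2 * ((u1*a + -(u1*t) + u2*b + u3*c)) = 0.
{ have -> : 2 * ((u1*a + -(u1*t) + u2*b + u3*c)) = ((-1)) * ((-2)*u1*d + (-2)*u2*b + 2*a*e + (-2)*b*c) + ((-1)) * (2*u1*f + (-2)*u3*c + (-2)*a*e + 2*b*c) + ((-2)*u1) * (t-(a-d+f)) by ring.
  by rewrite E2 E6 Gt; ring. }
have B1_0 : (u1*a + -(u1*t) + u2*b + u3*c) = 0 by apply: (@mulK0 1); exact: B1_0'.

have B1_1' : 2 * ((-(u1*b) + -(u2*d) + -(u2*t) + -(u3*e))) = 0.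
{ have -> : 2 * ((-(u1*b) + -(u2*d) + -(u2*t) + -(u3*e))) = ((-1)) * (2*u1*b + 2*u2*a + (-2)*b*e + 2*c*d) + (1) * ((-2)*u2*f + (-2)*u3*e + (-2)*b*e + 2*c*d) + ((-2)*u2) * (t-(a-d+f)) by ring.
  by rewrite E1 E9 Gt; ring. }
have B1_1 : (-(u1*b) + -(u2*d) + -(u2*t) + -(u3*e)) = 0 by apply: (@mulK0 1); exact: B1_1'.

have B1_2' : 2 * ((u1*c + u2*e + u3*f + -(u3*t))) = 0.
{ have -> : 2 * ((u1*c + u2*e + u3*f + -(u3*t))) = (1) * (2*u1*c + (-2)*u3*a + (-2)*b*f + 2*c*e) + (1) * (2*u2*e + 2*u3*d + 2*b*f + (-2)*c*e) + ((-2)*u3) * (t-(a-d+f)) by ring.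
  by rewrite E4 E8 Gt; ring. }
have B1_2 : (u1*c + u2*e + u3*f + -(u3*t)) = 0 by apply: (@mulK0 1); exact: B1_2'.

have B2_0' : 4 * ((u1*u1*t*t + a*a + -(b*b) + c*c)) = 0.
{ have -> : 4 * ((u1*u1*t*t + a*a + -(b*b) + c*c)) = ((-5)*u1*u3 + u1*b + 2*u2*a + (-2)*u2*f + (-2)*u3*e + 2*a*c + (-2)*b*e + 2*c*f) * (2*u1*b + 2*u2*a + (-2)*b*e + 2*c*d) + (3*u1*a + (-2)*u1*d + 5*u1*f + 2*u2*u3 + 2*u2*b + (-2)*u3*c + (-2)*a*e + 2*b*c) * ((-2)*u1*d + (-2)*u2*b + 2*a*e + (-2)*b*c) + (3*u1*u1 + 3*u1*e + (-2)*u2*u2 + 4*u2*c + (-2)*a*a + (-2)*a*d + 4*b*b + (-2)*c*c) * (-(u1*u1) + 2*u1*e + u2*u2 + 2*u2*c + -(u3*u3) + -(a*d) + -(a*f) + b*b + c*c + d*f + -(e*e) + (-1)) + ((-5)*u1*u2 + -(u1*c) + 2*u2*e + 2*u3*a + 2*u3*d + (-2)*a*b + 2*b*d + (-2)*c*e) * (2*u1*c + (-2)*u3*a + (-2)*b*f + 2*c*e) + (u1*u1 + -(u1*e) + 2*u2*u2 + 2*u3*b + (-2)*a*a + 2*b*b + (-2)*c*c + (-2)) * (-(u1*u1) + (-2)*u1*e + u2*u2 + -(u3*u3) + 2*u3*b + a*d + a*f + -(b*b) + -(c*c) + d*f + -(e*e) + (-1)) + (3*u1*a + (-3)*u1*d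 + 2*u1*f + (-2)*u2*u3 + 2*u3*c) * (2*u1*f + (-2)*u3*c + (-2)*a*e + 2*b*c) + ((-4)*u1*u1 + 2*u1*e + (-2)*u3*b + (-2)*a*d + 2*b*b + (-2)) * (-(u1*u1) + u2*u2 + (-2)*u2*c + -(u3*u3) + (-2)*u3*b + a*d + -(a*f) + -(b*b) + c*c + -(d*f) + e*e + (-1)) + (2*u1*u2) * (2*u2*e + 2*u3*d + 2*b*f + (-2)*c*e) + ((-2)*u1*u3) * ((-2)*u2*f + (-2)*u3*e + (-2)*b*e + 2*c*d) + ((-4)) * (u1*u1 - u2*u2 + u3*u3 + 1) + (4*u1*u1*a + (-4)*u1*u1*d + 4*u1*u1*f + 4*u1*u1*t) * (t-(a-d+f)) by ring.
  by rewrite E1 E2 E3 E4 E5 E6 E7 E8 E9 hb Gt; ring. }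
have B2_0 : (u1*u1*t*t + a*a + -(b*b) + c*c) = 0 by apply: (@mulK0 3); exact: B2_0'.

have B2_1' : 2 * ((-(u2*u2*t*t) + -(b*b) + d*d + -(e*e))) = 0.
{ have -> : 2 * ((-(u2*u2*t*t) + -(b*b) + d*d + -(e*e))) = (2*u1*u3 + 2*u2*f + -(u2*t) + u3*e + -(a*c) + b*e + -(c*f) + -(c*t)) * (2*u1*b + 2*u2*a + (-2)*b*e + 2*c*d) + ((-2)*u1*a + 2*u1*d + (-3)*u1*f + u1*t + (-2)*u2*u3 + u3*c + a*e + -(b*c) + e*t) * ((-2)*u1*d + (-2)*u2*b + 2*a*e + (-2)*b*c) + ((-2)*u1*u1 + (-2)*u1*e + 2*u2*u2 + (-3)*u2*c + a*a + a*d + a*t + (-2)*b*b + c*c + d*t + 2) * (-(u1*u1) + 2*u1*e + u2*u2 + 2*u2*c + -(u3*u3) + -(a*d) + -(a*f) + b*b + c*c + d*f + -(e*e) + (-1)) + (2*u1*u2 + u1*c + (-2)*u2*e + -(u3*a) + -(u3*d) + u3*t + a*b + -(b*d) + b*t + c*e) * (2*u1*c + (-2)*u3*a + (-2)*b*f + 2*c*e) + ((-2)*u2*u2 + -(u2*c) + -(u3*b) + a*a + a*t + -(b*b) + c*c + 4) * (-(u1*u1) + (-2)*u1*e + u2*u2 + -(u3*u3) + 2*u3*b + a*d + a*f + -(b*b) + -(c*c) + d*f + -(e*e) + (-1)) + ((-2)*u1*a + 2*u1*d + -(u1*f) + u1*t + 2*u2*u3 + u2*b + -(u3*c)) * (2*u1*f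 + (-2)*u3*c + (-2)*a*e + 2*b*c) + (2*u1*u1 + (-2)*u1*e + u3*b + a*d + -(b*b) + d*t + 4) * (-(u1*u1) + u2*u2 + (-2)*u2*c + -(u3*u3) + (-2)*u3*b + a*d + -(a*f) + -(b*b) + c*c + -(d*f) + e*e + (-1)) + ((-2)*u1*u2 + u3*t + b*t) * (2*u2*e + 2*u3*d + 2*b*f + (-2)*c*e) + (2*u1*u3 + -(u2*a) + u2*t) * ((-2)*u2*f + (-2)*u3*e + (-2)*b*e + 2*c*d) + (4*a*t + 10) * (u1*u1 - u2*u2 + u3*u3 + 1) + ((-2)*u1*u1*a + 4*u1*u1*d + (-2)*u1*u1*f + 4*u1*u2*b + 2*u2*u2*a + (-2)*u2*u2*t + (-2)*a + 2*d) * (t-(a-d+f)) by ring.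
  by rewrite E1 E2 E3 E4 E5 E6 E7 E8 E9 hb Gt; ring. }
have B2_1 : (-(u2*u2*t*t) + -(b*b) + d*d + -(e*e)) = 0 by apply: (@mulK0 1); exact: B2_1'.

have B2_2' : 4 * ((u3*u3*t*t + c*c + -(e*e) + f*f)) = 0.
{ have -> : 4 * ((u3*u3*t*t + c*c + -(e*e) + f*f)) = (u1*u3 + -(u1*b) + (-2)*u2*a + (-2)*u2*f + 2*u2*t + 2*c*t) * (2*u1*b + 2*u2*a + (-2)*b*e + 2*c*d) + (u1*a + (-2)*u1*d + u1*f + (-2)*u1*t + 2*u2*u3 + (-2)*u2*b + (-2)*e*t) * ((-2)*u1*d + (-2)*u2*b + 2*a*e + (-2)*b*c) + (u1*u1 + u1*e + (-2)*u2*u2 + 2*u2*c + (-2)*a*t + (-2)*d*t + 4) * (-(u1*u1) + 2*u1*e + u2*u2 + 2*u2*c + -(u3*u3) + -(a*d) + -(a*f) + b*b + c*c + d*f + -(e*e) + (-1)) + (u1*u2 + -(u1*c) + 2*u2*e + (-2)*u3*t + (-2)*b*t) * (2*u1*c + (-2)*u3*a + (-2)*b*f + 2*c*e) + (-(u1*u1) + u1*e + 2*u2*u2 + 2*u2*c + (-2)*a*t + 2) * (-(u1*u1) + (-2)*u1*e + u2*u2 + -(u3*u3) + 2*u3*b + a*d + a*f + -(b*b) + -(c*c) + d*f + -(e*e) + (-1)) + (u1*a + -(u1*d) + (-2)*u1*t + (-2)*u2*u3 + (-2)*u2*b) * (2*u1*f + (-2)*u3*c + (-2)*a*e + 2*b*c)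 + (2*u1*e + (-2)*d*t + 2) * (-(u1*u1) + u2*u2 + (-2)*u2*c + -(u3*u3) + (-2)*u3*b + a*d + -(a*f) + -(b*b) + c*c + -(d*f) + e*e + (-1)) + (2*u1*u2 + (-2)*u3*t + (-2)*b*t) * (2*u2*e + 2*u3*d + 2*b*f + (-2)*c*e) + ((-2)*u1*u3 + 2*u2*a + (-2)*u2*t) * ((-2)*u2*f + (-2)*u3*e + (-2)*b*e + 2*c*d) + ((-8)*a*t + 4*t*t + 8) * (u1*u1 - u2*u2 + u3*u3 + 1) + ((-4)*u1*u1*d + (-4)*u1*u1*t + (-8)*u1*u2*b + (-4)*u2*u2*a + 4*u2*u2*t + (-4)*f + (-4)*t) * (t-(a-d+f)) by ring.
  by rewrite E1 E2 E3 E4 E5 E6 E7 E8 E9 hb Gt; ring. }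
have B2_2 : (u3*u3*t*t + c*c + -(e*e) + f*f) = 0 by apply: (@mulK0 3); exact: B2_2'.

have W0u : (u1*u1*t + a)*u1 - (u1*u2*t + -(b))*u2 + (u1*u3*t + c)*u3 = 0.
{ have -> : (u1*u1*t + a)*u1 - (u1*u2*t + -(b))*u2 + (u1*u3*t + c)*u3 = (1) * (u1*a + -(u1*t) + u2*b + u3*c) + (u1*t) * (u1*u1 - u2*u2 + u3*u3 + 1) by ring.
  by rewrite B1_0 hb; ring. }

have W0w : (u1*u1*t + a)*(u1*u1*t + a) - (u1*u2*t + -(b))*(u1*u2*t + -(b)) + (u1*u3*t + c)*(u1*u3*t + c) = 0.
{ have -> : (u1*u1*t + a)*(u1*u1*t + a) - (u1*u2*t + -(b))*(u1*u2*t + -(b)) + (u1*u3*t + c)*(u1*u3*t + c) = (2*u1*t) * (u1*a + -(u1*t) + u2*b + u3*c) + (1) * (u1*u1*t*t + a*a + -(b*b) + c*c) + (u1*u1*t*t) * (u1*u1 - u2*u2 + u3*u3 + 1) by ring.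
  by rewrite B1_0 B2_0 hb; ring. }

have W1u : (-(u1*u2*t) + b)*u1 - (-(u2*u2*t) + -(d))*u2 + (-(u2*u3*t) + e)*u3 = 0.
{ have -> : (-(u1*u2*t) + b)*u1 - (-(u2*u2*t) + -(d))*u2 + (-(u2*u3*t) + e)*u3 = ((-1)) * (-(u1*b) + -(u2*d) + -(u2*t) + -(u3*e)) + (-(u2*t)) * (u1*u1 - u2*u2 + u3*u3 + 1) by ring.
  by rewrite B1_1 hb; ring. }

have W1w : (-(u1*u2*t) + b)*(-(u1*u2*t) + b) - (-(u2*u2*t) + -(d))*(-(u2*u2*t) + -(d)) + (-(u2*u3*t) + e)*(-(u2*u3*t) + e) = 0.
{ have -> : (-(u1*u2*t) + b)*(-(u1*u2*t) + b) - (-(u2*u2*t) + -(d))*(-(u2*u2*t) + -(d)) + (-(u2*u3*t) + e)*(-(u2*u3*t) + e) = (2*u2*t) * (-(u1*b) + -(u2*d) + -(u2*t) + -(u3*e)) + ((-1)) * (-(u2*u2*t*t) + -(b*b) + d*d + -(e*e)) + (u2*u2*t*t) * (u1*u1 - u2*u2 + u3*u3 + 1) by ring.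
  by rewrite B1_1 B2_1 hb; ring. }

have W2u : (u1*u3*t + c)*u1 - (u2*u3*t + -(e))*u2 + (u3*u3*t + f)*u3 = 0.
{ have -> : (u1*u3*t + c)*u1 - (u2*u3*t + -(e))*u2 + (u3*u3*t + f)*u3 = (1) * (u1*c + u2*e + u3*f + -(u3*t)) + (u3*t) * (u1*u1 - u2*u2 + u3*u3 + 1) by ring.
  by rewrite B1_2 hb; ring. }

have W2w : (u1*u3*t + c)*(u1*u3*t + c) - (u2*u3*t + -(e))*(u2*u3*t + -(e)) + (u3*u3*t + f)*(u3*u3*t + f) = 0.
{ have -> : (u1*u3*t + c)*(u1*u3*t + c) - (u2*u3*t + -(e))*(u2*u3*t + -(e)) + (u3*u3*t + f)*(u3*u3*t + f) = (2*u3*t) * (u1*c + u2*e + u3*f + -(u3*t)) + (1) * (u3*u3*t*t + c*c + -(e*e) + f*f) + (u3*u3*t*t) * (u1*u1 - u2*u2 + u3*u3 + 1) by ring.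
  by rewrite B1_2 B2_2 hb; ring. }
have [w00 w01 w02] := null_lemma W0u W0w hb.
have [w10 w11 w12] := null_lemma W1u W1w hb.
have [w20 w21 w22] := null_lemma W2u W2w hb.
split => //; split; [|split; [|split; [|split; [|split]]]].
- by transitivity ((u1*u1*t + a) - t*u1*u1); [ring | rewrite w00; ring].
- by transitivity (-(u1*u2*t + -(b)) + t*u1*u2); [ring | rewrite w01; ring].
- by transitivity ((u1*u3*t + c) - t*u1*u3); [ring | rewrite w02; ring].
- by transitivity (-(-(u2*u2*t) + -(d)) - t*u2*u2); [ring | rewrite w11; ring].
- by transitivity ((-(u2*u3*t) + e) + t*u2*u3); [ring | rewrite w12; ring].
- by transitivity ((u3*u3*t + f) - t*u3*u3); [ring | rewrite w22; ring].
Qed.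
End Solve.

Section Main.
Variable R : realType.

Definition Jf (u1 u2 u3 a b c d e f : R) : 'M[R]_3 :=
  mx3 [:: [:: a; b+u3; c-u2]; [:: -b+u3; -d; -e-u1]; [:: c+u2; e-u1; f]].

Lemma eq0_of (x y : R) : y = 0 -> x = y -> x = 0.
Proof. by move=> -> . Qed.

Lemma two_neq0 : (2 : R) != 0.
Proof. by rewrite pnatr_eq0. Qed.

Lemma Jf_surj (J : 'M[R]_3) : exists u1 u2 u3 a b c d e f, J = Jf u1 u2 u3 a b c d e f.
Proof.
exists (-(J 1 2%:R + J 2%:R 1)/2), ((J 2%:R 0 - J 0 2%:R)/2), ((J 0 1 + J 1 0)/2),
  (J 0 0), ((J 0 1 - J 1 0)/2), ((J 0 2%:R + J 2%:R 0)/2), (- J 1 1),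
  ((J 2%:R 1 - J 1 2%:R)/2), (J 2%:R 2%:R).
rewrite {1}(mx3_eta J) /Jf.
congr (mx3 [:: [:: _; _; _]; [:: _; _; _]; [:: _; _; _]]); field => //.
Qed.

Lemma Jform_act (u1 u2 u3 t : R) (x : 'cV[R]_3) :
  Jf u1 u2 u3 (-(t*u1*u1)) (t*u1*u2) (-(t*u1*u3)) (-(t*u2*u2)) (t*u2*u3) (-(t*u3*u3)) *m x =
  lb x (vec3 u1 u2 u3) - (t * Bf x (vec3 u1 u2 u3)) *: vec3 u1 u2 u3.
Proof.
rewrite (vec3_eta x) /Jf mx3_mulv lb_vec3 Bf_vec3 vec3Z vec3B; congr vec3; ring.
Qed.

Lemma Jstar_act (t : R) (x : 'cV[R]_3) :
  Jstar t *m x = lb x (vec3 0 1 0) - (t * Bf x (vec3 0 1 0)) *: vec3 0 1 0.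
Proof.
rewrite (vec3_eta x) /Jstar mx3_mulv lb_vec3 Bf_vec3 vec3Z vec3B; congr vec3; ring.
Qed.

Lemma key_conj (u1 u2 u3 t : R) (P : 'M[R]_3) : lie_aut P ->
  (forall x y, Bf (P *m x) (P *m y) = Bf x y) -> P *m vec3 u1 u2 u3 = vec3 0 1 0 ->
  equivJ (Jf u1 u2 u3 (-(t*u1*u1)) (t*u1*u2) (-(t*u1*u3)) (-(t*u2*u2)) (t*u2*u3) (-(t*u3*u3)))
         (Jstar t).
Proof.
move=> [Pu Paut] PB Pv; exists P; split; first by [].
set J := Jf _ _ _ _ _ _ _ _ _.
have EQ : P *m J = Jstar t *m P.
  apply: colext => x.
  rewrite -!mulmxA Jform_act mulmxBr -scalemxAr Paut Pv -(PB x (vec3 u1 u2 u3)) Pv Jstar_act.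
  by [].
by rewrite EQ -mulmxA mulmxV // mulmx1.
Qed.

Lemma RR_props (q0 q1 q2 w0 w1 w2 : R) :
  q0*q0 - q1*q1 + q2*q2 != 0 -> w0*w0 - w1*w1 + w2*w2 != 0 ->
  lie_aut (Rm3 q0 q1 q2 *m Rm3 w0 w1 w2) /\
  (forall x y, Bf ((Rm3 q0 q1 q2 *m Rm3 w0 w1 w2) *m x) ((Rm3 q0 q1 q2 *m Rm3 w0 w1 w2) *m y) = Bf x y).
Proof.
move=> hp hw; split; first split.
- have := Rm_invol hp; have := Rm_invol hw => Hw Hp.
  have H : (Rm3 q0 q1 q2 *m Rm3 w0 w1 w2) *m (Rm3 w0 w1 w2 *m Rm3 q0 q1 q2) = 1%:M.
    by rewrite -mulmxA (mulmxA (Rm3 w0 w1 w2)) Hw mul1mx Hp.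
  by case: (mulmx1_unit H).
- by move=> x y; rewrite -!mulmxA (Rm_anti _ _ hw) mulmxN (Rm_anti _ _ hp) opprK.
- by move=> x y; rewrite -!mulmxA (Rm_B _ _ hp) (Rm_B _ _ hw).
Qed.

Lemma conj_exists (u1 u2 u3 t : R) : u1*u1 - u2*u2 + u3*u3 + 1 = 0 ->
  equivJ (Jf u1 u2 u3 (-(t*u1*u1)) (t*u1*u2) (-(t*u1*u3)) (-(t*u2*u2)) (t*u2*u3) (-(t*u3*u3)))
         (Jstar t).
Proof.
move=> hb.
have [hu2|hu2] := ltrP 0 u2.
- have hw : u1*u1 - (u2+1)*(u2+1) + u3*u3 != 0.
    have -> : u1*u1 - (u2+1)*(u2+1) + u3*u3 = (u1*u1 - u2*u2 + u3*u3 + 1) - 2 - 2*u2 by ring.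
    by rewrite hb ltr0_neq0 //; lra.
  have hp : (0*0 - 1*1 + 0*0 : R) != 0.
    rewrite (_ : (0*0 - 1*1 + 0*0 : R) = -1); last by ring.
    by rewrite oppr_eq0 oner_eq0.
  have [Pa PB] := RR_props hp hw.
  apply: key_conj Pa PB _.
  have Iw : Rm3 u1 (u2+1) u3 *m vec3 u1 u2 u3 = vec3 0 (-1) 0.
    have hs : u1*u1 - (u2+1)*(u2+1) + u3*u3 = 2 * ((u1*u1 - u2*(u2+1) + u3*u3)).
      rewrite (_ : u1*u1 - (u2+1)*(u2+1) + u3*u3 = 2 * ((u1*u1 - u2*(u2+1) + u3*u3)) - (u1*u1 - u2*u2 + u3*u3 + 1)); last by ring.
      by rewrite hb subr0.
    have hs' : (u1*u1 - u2*(u2+1) + u3*u3) != 0.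
      by move: hw; rewrite hs mulf_eq0 negb_or => /andP[].
    rewrite Rm_act vec3Z vec3B hs; congr vec3; field => //; exact: hs'.
  rewrite -mulmxA Iw Rm_act vec3Z vec3B; congr vec3; field => //.
- have hw : u1*u1 - (u2-1)*(u2-1) + u3*u3 != 0.
    have -> : u1*u1 - (u2-1)*(u2-1) + u3*u3 = (u1*u1 - u2*u2 + u3*u3 + 1) - 2 + 2*u2 by ring.
    by rewrite hb ltr0_neq0 //; lra.
  have hp : (1*1 - 0*0 + 0*0 : R) != 0.
    rewrite (_ : (1*1 - 0*0 + 0*0 : R) = 1); last by ring.
    by rewrite oner_eq0.
  have [Pa PB] := RR_props hp hw.
  apply: key_conj Pa PB _.
  have Iw : Rm3 u1 (u2-1) u3 *m vec3 u1 u2 u3 = vec3 0 1 0.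
    have hs : u1*u1 - (u2-1)*(u2-1) + u3*u3 = 2 * ((u1*u1 - u2*(u2-1) + u3*u3)).
      rewrite (_ : u1*u1 - (u2-1)*(u2-1) + u3*u3 = 2 * ((u1*u1 - u2*(u2-1) + u3*u3)) - (u1*u1 - u2*u2 + u3*u3 + 1)); last by ring.
      by rewrite hb subr0.
    have hs' : (u1*u1 - u2*(u2-1) + u3*u3) != 0.
      by move: hw; rewrite hs mulf_eq0 negb_or => /andP[].
    rewrite Rm_act vec3Z vec3B hs; congr vec3; field => //; exact: hs'.
  rewrite -mulmxA Iw Rm_act vec3Z vec3B; congr vec3; field => //.
Qed.

End Main.

Section Fin.
Variable R : realType.

Lemma tf_Jf (u1 u2 u3 a b c d e f : R) : torsion_free (Jf u1 u2 u3 a b c d e f) ->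
  exists l, equivJ (Jf u1 u2 u3 a b c d e f) (Jstar l).
Proof.
move=> H.
have h01 := H (vec3 1 0 0) (vec3 0 1 0).
have h02 := H (vec3 1 0 0) (vec3 0 0 1).
have h12 := H (vec3 0 1 0) (vec3 0 0 1).
rewrite /Jf (mx3_mulv _ _ _ _ _ _ _ _ _ 1 0 0) (mx3_mulv _ _ _ _ _ _ _ _ _ 0 1 0)
  (mx3_mulv _ _ _ _ _ _ _ _ _ 0 0 1) !lb_vec3 !mx3_mulv !vec3B vec3_0 in h01 h02 h12.
case/vec3_inj: h01 => C1 C2 C3.
case/vec3_inj: h02 => C4 C5 C6.
case/vec3_inj: h12 => C7 C8 C9.
have T := @solve_torsion R u1 u2 u3 a b c d e f (a-d+f) (subrr _).
have [hb0 [ha [hbb [hc [hd [he hf]]]]]] : (u1*u1 - u2*u2 + u3*u3 + 1) = 0 /\ a = -((a-d+f)*u1*u1) /\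
   b = (a-d+f)*u1*u2 /\ c = -((a-d+f)*u1*u3) /\ d = -((a-d+f)*u2*u2) /\ e = (a-d+f)*u2*u3 /\ f = -((a-d+f)*u3*u3).
  apply: T; [apply: (eq0_of C1)|apply: (eq0_of C2)|apply: (eq0_of C3)|apply: (eq0_of C4)|
     apply: (eq0_of C5)|apply: (eq0_of C6)|apply: (eq0_of C7)|apply: (eq0_of C8)|apply: (eq0_of C9)]; ring.
move: ha hbb hc hd he hf; move: (a-d+f) => t ha hbb hc hd he hf.
subst a b c d e f.
exists t; exact: conj_exists.
Qed.

Lemma Jstar_tf (l : R) : torsion_free (Jstar l).
Proof.
move=> x y; rewrite (vec3_eta x) (vec3_eta y) /Jstar.
move: (x 0 0) (x 1 0) (x 2%:R 0) (y 0 0) (y 1 0) (y 2%:R 0) => x0 x1 x2 y0 y1 y2.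
rewrite (mx3_mulv _ _ _ _ _ _ _ _ _ x0 x1 x2) (mx3_mulv _ _ _ _ _ _ _ _ _ y0 y1 y2) !lb_vec3 !mx3_mulv !vec3B vec3_0.
congr vec3; ring.
Qed.

Lemma tf_conj (A P : 'M[R]_3) : torsion_free A -> lie_aut P -> torsion_free (invmx P *m A *m P).
Proof.
move=> HA [Pu Paut] x y.
set Q := invmx P.
have PQ : forall z : 'cV[R]_3, P *m (Q *m z) = z by move=> z; rewrite mulmxA mulmxV // mul1mx.
have QP : forall z : 'cV[R]_3, Q *m (P *m z) = z by move=> z; rewrite mulmxA mulVmx // mul1mx.
have Qaut : forall x y : 'cV[R]_3, Q *m lb x y = lb (Q *m x) (Q *m y).
  move=> x0 y0; have := Paut (Q *m x0) (Q *m y0); rewrite !PQ => <-.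
  by rewrite QP.
have hJ : forall z : 'cV[R]_3, (Q *m A *m P) *m z = Q *m (A *m (P *m z)) by move=> z; rewrite !mulmxA.
rewrite !hJ.
rewrite -{2 4}(QP x) -{2 3}(QP y).
rewrite -!Qaut !PQ -!mulmxBr.
by rewrite HA mulmx0.
Qed.

Lemma tf_iff (J : 'M[R]_3) : torsion_free J <-> exists l, equivJ J (Jstar l).
Proof.
split.
- by case: (Jf_surj J) => [u1 [u2 [u3 [a [b [c [d [e [f ->]]]]]]]]]; exact: tf_Jf.
- move=> [l [P [[Pu Paut] EQ]]].
  have -> : J = invmx P *m Jstar l *m P.
    by rewrite EQ !mulmxA mulVmx // mul1mx -mulmxA mulVmx // mulmx1.
  apply: tf_conj; first exact: Jstar_tf.
  by split.
Qed.

Lemma equiv_tr (A B : 'M[R]_3) : equivJ A B -> \tr B = \tr A.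
Proof.
by move=> [P [[Pu _] ->]]; rewrite mxtrace_mulC mulmxA mulVmx // mul1mx.
Qed.

Lemma tr_Jstar (l : R) : \tr (Jstar l) = l.
Proof. by rewrite /mxtrace /Jstar !big_ord_recr big_ord0 /= !mxE /=; ring. Qed.

Lemma endoJ (a : R) : endo_HX (Jalpha a) = Jstar (a + a).
Proof.
have EQ : BHX R *m Jalpha a = Jstar (a + a) *m BHX R.
  apply: colext => x; rewrite -!mulmxA (vec3_eta x) /BHX /Jalpha /Jstar !mx3_mulv.
  by congr vec3; field.
have U : BHX R \in unitmx.
  have H : BHX R *m mx3 [:: [:: 1/2; 0; 0]; [:: 0; 1/2; 1/2]; [:: 0; -(1/2); 1/2]] = 1%:M.
    apply: colext => x; rewrite mul1mx -!mulmxA (vec3_eta x) /BHX !mx3_mulv.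
    by congr vec3; field.
  by case: (mulmx1_unit H).
by rewrite /endo_HX EQ -mulmxA mulmxV // mulmx1.
Qed.

End Fin.

Unset Implicit Arguments.

Theorem lemma1 (R : realType) :
  (forall J : 'M[R]_3, torsion_free J <-> exists l : R, equivJ J (Jstar l)) /\
  (forall l m : R, l <> m -> ~ equivJ (Jstar l) (Jstar m)) /\
  (forall J : 'M[R]_3, torsion_free J <-> exists a : R, equivJ J (endo_HX (Jalpha a))) /\
  (forall a b : R, a <> b -> ~ equivJ (endo_HX (Jalpha a)) (endo_HX (Jalpha b))).
Proof.
split; first exact: tf_iff.
split.
  move=> l m hlm H; apply: hlm.
  by have := equiv_tr H; rewrite !tr_Jstar.
split.
  move=> J; rewrite tf_iff; split.
  - move=> [l H]; exists (l / 2); rewrite endoJ.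
    by have -> : l / 2 + l / 2 = l by field.
  - by move=> [a]; rewrite endoJ => H; exists (a + a).
move=> a b hab; rewrite !endoJ => H; apply: hab.
have := equiv_tr H; rewrite !tr_Jstar => h.
lra.
Qed.
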